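(* Let $A$ be a real $B\times N'$ matrix of rank $r\ge1$ with nonzero singular values $\sigma_1\ge\sigma_2\ge\dots\ge\sigma_r$, all lying in $(0,1]$, left singular vectors $\boldsymbol\xi_j\in\mathbb{R}^B$ and right singular vectors $\hat{\boldsymbol\xi}_j\in\mathbb{R}^{N'}$ (orthonormal, $A\hat{\boldsymbol\xi}_j=\sigma_j\boldsymbol\xi_j$, $A^T\boldsymbol\xi_j=\sigma_j\hat{\boldsymbol\xi}_j$). Let $\boldsymbol b=\sum_{j=1}^r b_j\boldsymbol\xi_j$ and $\boldsymbol b^\delta=\sum_{j=1}^r b^\delta_j\boldsymbol\xi_j$ lie in the range of $A$, let $\boldsymbol x=\sum_{j=1}^r \frac{b_j}{\sigma_j}\hat{\boldsymbol\xi}_j$ be the minimal-norm solution of $A\boldsymbol x=\boldsymbol b$, and for a filter function $\phi(s,\alpha)$ let $$\boldsymbol x^{\alpha,\delta}=\sum_{j=1}^r b_j^\delta\frac{\phi(\sigma_j,\alpha)}{\sigma_j}\hat{\boldsymbol\xi}_j.$$ Let $f:[0,\infty)\to(0,1]$ be continuous and strictly decreasing with $f(0)=1$, $f(j)=\sigma_j$ for $j=1,\dots,r$, and $f(t)\to0$ as $t\to\infty$, and assume that, for the fixed $\alpha>0$, the functions $t\mapsto|1-\phi(f(t),\alpha)|$ and $t\mapsto|\phi(f(t),\alpha)|/f(t)$ are nondecreasing on $[0,r+1]$. Then for every $p\in[1,\infty)$ there is a constant $C_1$, depending only on $p$ and on the matrix $A$ (through its dimensions and singular vectors), and not on $\alpha,\phi,\boldsymbol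 b,\boldsymbol b^\delta$, such that $$\|\boldsymbol x-\boldsymbol x^{\alpha,\delta}\|_p\le C_1\|\boldsymbol x\|_\infty\,\|1-\phi(f(\cdot),\alpha)\|_{L^p(0,r+1)}+C_1\|\boldsymbol b-\boldsymbol b^\delta\|_\infty\,\|\phi(f(\cdot),\alpha)\,f(\cdot)^{-1}\|_{L^p(0,r+1)}.$$
   Context: Filtered linear regularization of the ill-conditioned linear system $A\boldsymbol x=\boldsymbol b$ arising from discretizing a convolution (averaging) operator; $\boldsymbol b^\delta$ is a perturbed right-hand side. $\|\cdot\|_p$ and $\|\cdot\|_\infty$ are vector norms; $\|\cdot\|_{L^p(0,r+1)}$ is the Lebesgue norm of a function of $t\in(0,r+1)$. *)

(* Defs.v *)
From Stdlib Require Import Reals Lra.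
Open Scope R_scope.

Fixpoint rsum (n : nat) (F : nat -> R) : R :=
  match n with
  | O => 0
  | S m => rsum m F + F m
  end.

Definition sum1 (r : nat) (F : nat -> R) : R := rsum r (fun k => F (S k)).

(* real power x^p for x >= 0, with the convention 0^p = 0 (p >= 1) *)
Definition rpow (x p : R) : R :=
  if Req_EM_T x 0 then 0 else Rpower x p.

(* vectors in R^n are functions nat -> R, indices 0..n-1 *)
Definition vnorm_p (n : nat) (p : R) (v : nat -> R) : R :=
  rpow (rsum n (fun i => rpow (Rabs (v i)) p)) (1 / p).

Fixpoint vnorm_inf (n : nat) (v : nat -> R) : R :=
  match n with
  | O => 0
  | S m => Rmax (vnorm_inf m v) (Rabs (v m))
  end.

Definition Lpnorm (g : R -> R) (p a b : R)
  (pr : Riemann_integrable (fun t => rpow (Rabs (g t)) p) a b) : R :=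
  rpow (RiemannInt pr) (1 / p).

(* Main.v *)
Require Import Defs.
From Stdlib Require Import Reals Lra Lia.
Open Scope R_scope.

Lemma rsum_S n F : rsum (S n) F = rsum n F + F n.
Proof. reflexivity. Qed.

Lemma rsum_ext n F G : (forall i, (i < n)%nat -> F i = G i) -> rsum n F = rsum n G.
Proof. induction n; simpl; intros H; auto. rewrite IHn, H; auto. Qed.

Lemma rsum_le n F G : (forall i, (i < n)%nat -> F i <= G i) -> rsum n F <= rsum n G.
Proof. induction n; simpl; intros H; try lra. specialize (IHn (fun i Hi => H i ltac:(lia))). specialize (H n ltac:(lia)). lra. Qed.

Lemma rsum_add n F G : rsum n (fun i => F i + G i) = rsum n F + rsum n G.
Proof. induction n; simpl; [lra|]. rewrite IHn; lra. Qed.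

Lemma rsum_scal n c F : rsum n (fun i => c * F i) = c * rsum n F.
Proof. induction n; simpl; [lra|]. rewrite IHn; lra. Qed.

Lemma rsum_mulr n c F : rsum n (fun i => F i * c) = rsum n F * c.
Proof. induction n; simpl; [lra|]. rewrite IHn; lra. Qed.

Lemma rsum_const n c : rsum n (fun _ => c) = INR n * c.
Proof. induction n; simpl rsum; [simpl; lra|]. rewrite IHn, S_INR; lra. Qed.

Lemma rsum_abs n F : Rabs (rsum n F) <= rsum n (fun i => Rabs (F i)).
Proof. induction n; simpl. rewrite Rabs_R0; lra.
  eapply Rle_trans; [apply Rabs_triang|]. lra. Qed.

Lemma rsum_nonneg n F : (forall i, (i < n)%nat -> 0 <= F i) -> 0 <= rsum n F.
Proof. intros H. replace 0 with (rsum n (fun _ => 0)) at 1.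
  apply rsum_le; auto. rewrite rsum_const; ring. Qed.

Lemma rsum_term n F j : (forall i, (i < n)%nat -> 0 <= F i) -> (j < n)%nat -> F j <= rsum n F.
Proof. induction n; intros H Hj; [lia|]. simpl.
  destruct (Nat.eq_dec j n).
  - subst. assert (0 <= rsum n F) by (apply rsum_nonneg; intros; apply H; lia). lra.
  - assert (F j <= rsum n F) by (apply IHn; [intros; apply H; lia| lia]).
    specialize (H n ltac:(lia)). lra. Qed.

Lemma rsum_zero n F : (forall i, (i < n)%nat -> F i = 0) -> rsum n F = 0.
Proof. intros H. rewrite (rsum_ext n F (fun _ => 0)) by auto. rewrite rsum_const; ring. Qed.

Lemma rsum_exch n m (F : nat -> nat -> R) :
  rsum n (fun i => rsum m (fun j => F i j)) = rsum m (fun j => rsum n (fun i => F i j)).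
Proof. induction n; simpl.
  - rewrite rsum_zero; auto.
  - rewrite IHn, <- rsum_add. auto. Qed.



Lemma sum1_delta r (a : nat -> R) j : (1 <= j <= r)%nat ->
  sum1 r (fun l => a l * (if Nat.eq_dec l j then 1 else 0)) = a j.
Proof. unfold sum1. induction r; intros Hj; [lia|]. rewrite rsum_S.
  destruct (Nat.eq_dec (S r) j).
  - subst. rewrite rsum_zero. destruct (Nat.eq_dec (S r) (S r)); [ring|lia].
    intros i Hi. destruct (Nat.eq_dec (S i) (S r)); [lia|ring].
  - rewrite IHr by lia. destruct (Nat.eq_dec (S r) j); [lia|ring]. Qed.

Lemma vnorm_inf_nonneg n v : 0 <= vnorm_inf n v.
Proof. induction n; simpl; [lra|]. eapply Rle_trans; [apply IHn| apply Rmax_l]. Qed.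

Lemma vnorm_inf_ge n v i : (i < n)%nat -> Rabs (v i) <= vnorm_inf n v.
Proof. induction n; intros H; [lia|]. simpl. destruct (Nat.eq_dec i n).
  subst; apply Rmax_r. eapply Rle_trans; [apply IHn; lia| apply Rmax_l]. Qed.

Lemma rpow_nonneg x p : 0 <= rpow x p.
Proof. unfold rpow. destruct (Req_EM_T x 0); [lra|]. unfold Rpower. left; apply exp_pos. Qed.

Lemma rpow_pos x p : x <> 0 -> rpow x p = Rpower x p.
Proof. unfold rpow. destruct (Req_EM_T x 0); [contradiction|auto]. Qed.

Lemma rpow_mono a b p : 0 <= a <= b -> 0 <= p -> rpow a p <= rpow b p.
Proof. intros H Hp. destruct (Req_EM_T a 0).
  - subst. unfold rpow at 1. destruct (Req_EM_T 0 0); [|lra]. apply rpow_nonneg.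
  - rewrite !rpow_pos by lra. apply Rle_Rpower_l; lra. Qed.

Lemma rpow_inv c p : 0 < c -> 0 < p -> rpow (rpow c p) (1/p) = c.
Proof. intros Hc Hp. rewrite (rpow_pos c) by lra. rewrite rpow_pos.
  rewrite Rpower_mult. replace (p * (1/p)) with 1 by (field; lra). apply Rpower_1; auto.
  unfold Rpower. pose proof (exp_pos (p * ln c)). lra. Qed.

Lemma rpow_le_inv a S p : 0 <= a -> 0 < p -> rpow a p <= S -> a <= rpow S (1/p).
Proof. intros Ha Hp H. destruct (Req_EM_T a 0). subst; apply rpow_nonneg.
  rewrite <- (rpow_inv a p) by lra. apply rpow_mono. split; auto; apply rpow_nonneg.
  apply Rlt_le, Rdiv_lt_0_compat; lra. Qed.

Lemma rpow_le_inv2 S c p : 0 <= S -> 0 <= c -> 0 < p -> S <= rpow c p -> rpow S (1/p) <= c.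
Proof. intros HS Hc Hp H. destruct (Req_EM_T c 0).
  - subst. unfold rpow in H at 1. destruct (Req_EM_T 0 0); [|lra].
    assert (S = 0) by lra. subst. unfold rpow. destruct (Req_EM_T 0 0); lra.
  - rewrite <- (rpow_inv c p) by lra. apply rpow_mono. lra.
    apply Rlt_le, Rdiv_lt_0_compat; lra. Qed.

Lemma rpow_scal_ge n M p : (1 <= n) -> 0 <= M -> 1 <= p -> n * rpow M p <= rpow (n * M) p.
Proof. intros Hn HM Hp. destruct (Req_EM_T M 0).
  - subst. unfold rpow. destruct (Req_EM_T 0 0); [|lra]. rewrite Rmult_0_r.
    destruct (Req_EM_T 0 0); lra.
  - rewrite !rpow_pos by nra. rewrite <- Rpower_mult_distr by lra.
    apply Rmult_le_compat_r. unfold Rpower; left; apply exp_pos.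
    pattern n at 1; rewrite <- (Rpower_1 n) by lra. apply Rle_Rpower; lra. Qed.

Lemma int_ge g a b c (pr : Riemann_integrable g a b) :
  a <= c -> c + 1 <= b -> (forall t, a < t < b -> 0 <= g t) ->
  (forall t, c < t < b -> g c <= g t) -> 0 <= g c -> g c <= RiemannInt pr.
Proof. intros Hac Hcb H0 Hm Hgc. assert (Hcb' : c <= b) by lra.
  pose proof (RiemannInt_P22 pr (conj Hac Hcb')) as pr1.
  pose proof (RiemannInt_P23 pr (conj Hac Hcb')) as pr2.
  rewrite <- (RiemannInt_P26 pr1 pr2 pr).
  assert (0 <= RiemannInt pr1).
  { assert (RiemannInt (RiemannInt_P14 a c 0) <= RiemannInt pr1).
    { apply RiemannInt_P19; auto. intros; unfold fct_cte; apply H0; lra. }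
    rewrite RiemannInt_P15 in H. lra. }
  assert (g c * (b - c) <= RiemannInt pr2).
  { rewrite <- (RiemannInt_P15 (RiemannInt_P14 c b (g c))).
    apply RiemannInt_P19; [lra|]. intros; unfold fct_cte; apply Hm; lra. }
  nra. Qed.

Lemma coef_extract N r (w : nat -> nat -> R) (c : nat -> R) j :
  (forall j k, (1 <= j <= r)%nat -> (1 <= k <= r)%nat ->
     rsum N (fun i => w j i * w k i) = if Nat.eq_dec j k then 1 else 0) ->
  (1 <= j <= r)%nat ->
  rsum N (fun k => sum1 r (fun l => c l * w l k) * w j k) = c j.
Proof. intros Hon Hj. unfold sum1.
  rewrite (rsum_ext N _ (fun k => rsum r (fun l => c (S l) * (w (S l) k * w j k)))).
  2:{ intros i _. rewrite <- rsum_mulr. apply rsum_ext. intros; ring. }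
  rewrite rsum_exch.
  rewrite (rsum_ext r _ (fun l => c (S l) * (if Nat.eq_dec (S l) j then 1 else 0))).
  - apply (sum1_delta r c j Hj).
  - intros i Hi. rewrite rsum_scal, Hon by lia. auto. Qed.

Lemma entry_le1 N r (w : nat -> nat -> R) j k :
  (forall j k, (1 <= j <= r)%nat -> (1 <= k <= r)%nat ->
     rsum N (fun i => w j i * w k i) = if Nat.eq_dec j k then 1 else 0) ->
  (1 <= j <= r)%nat -> (k < N)%nat -> Rabs (w j k) <= 1.
Proof. intros Hon Hj Hk. pose proof (Hon j j Hj Hj) as H.
  destruct (Nat.eq_dec j j); [|lia].
  assert (w j k * w j k <= 1).
  { rewrite <- H. apply (rsum_term N (fun i => w j i * w j i)); auto.
    intros; nra. }
  unfold Rabs; destruct (Rcase_abs (w j k)); nra. Qed.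

Lemma coef_bound N r (w : nat -> nat -> R) (v : nat -> R) j :
  (forall j k, (1 <= j <= r)%nat -> (1 <= k <= r)%nat ->
     rsum N (fun i => w j i * w k i) = if Nat.eq_dec j k then 1 else 0) ->
  (1 <= j <= r)%nat -> Rabs (rsum N (fun k => v k * w j k)) <= INR N * vnorm_inf N v.
Proof. intros Hon Hj. eapply Rle_trans; [apply rsum_abs|].
  rewrite <- rsum_const. apply rsum_le. intros i Hi. rewrite Rabs_mult.
  pose proof (vnorm_inf_ge N v i Hi). pose proof (entry_le1 N r w j i Hon Hj Hi).
  pose proof (Rabs_pos (v i)). pose proof (Rabs_pos (w j i)). nra. Qed.

Lemma rsum_sub n F G : rsum n F - rsum n G = rsum n (fun i => F i - G i).
Proof. induction n; simpl; [lra|]. rewrite <- IHn; lra. Qed.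

Lemma Rabs_div_pos a y : 0 < y -> Rabs (a / y) = Rabs a / y.
Proof. intros H. unfold Rdiv. rewrite Rabs_mult, Rabs_inv, (Rabs_right y) by lra. auto. Qed.

Theorem mainTheorem2
  (B N' : nat) (A : nat -> nat -> R) (r : nat)
  (sigma : nat -> R) (xi xih : nat -> nat -> R)
  (* r >= 1 ; indices j range over 1..r *)
  (Hr : (1 <= r)%nat)
  (Hsig_pos : forall j, (1 <= j <= r)%nat -> 0 < sigma j <= 1)
  (Hsig_dec : forall j k, (1 <= j)%nat -> (j <= k)%nat -> (k <= r)%nat ->
                sigma k <= sigma j)
  (* orthonormal left singular vectors xi j in R^B *)
  (Hxi_on : forall j k, (1 <= j <= r)%nat -> (1 <= k <= r)%nat ->
     rsum B (fun i => xi j i * xi k i) = if Nat.eq_dec j k then 1 else 0)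
  (* orthonormal right singular vectors xih j in R^N' *)
  (Hxih_on : forall j k, (1 <= j <= r)%nat -> (1 <= k <= r)%nat ->
     rsum N' (fun i => xih j i * xih k i) = if Nat.eq_dec j k then 1 else 0)
  (* A (B x N') has rank r with this singular value decomposition *)
  (HA : forall i k, (i < B)%nat -> (k < N')%nat ->
     A i k = sum1 r (fun j => sigma j * xi j i * xih j k))
  (HAxi : forall j i, (1 <= j <= r)%nat -> (i < B)%nat ->
     rsum N' (fun k => A i k * xih j k) = sigma j * xi j i)
  (HATxi : forall j k, (1 <= j <= r)%nat -> (k < N')%nat ->
     rsum B (fun i => A i k * xi j i) = sigma j * xih j k) :
  forall p : R, 1 <= p ->
  exists C1 : R,
  forall (alpha : R) (phi : R -> R -> R) (bc bdc : nat -> R) (f : R -> R),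
    0 < alpha ->
    (* f : [0,oo) -> (0,1] continuous, strictly decreasing *)
    (forall t, 0 <= t -> 0 < f t <= 1) ->
    (forall t, 0 <= t -> forall eps, 0 < eps -> exists delta, 0 < delta /\
        forall s, 0 <= s -> Rabs (s - t) < delta -> Rabs (f s - f t) < eps) ->
    (forall s t, 0 <= s -> s < t -> f t < f s) ->
    f 0 = 1 ->
    (forall j, (1 <= j <= r)%nat -> f (INR j) = sigma j) ->
    (forall eps, 0 < eps -> exists T, forall t, T <= t -> Rabs (f t) < eps) ->
    (* monotonicity of the filter-derived functions on [0, r+1] *)
    (forall s t, 0 <= s -> s <= t -> t <= INR r + 1 ->
       Rabs (1 - phi (f s) alpha) <= Rabs (1 - phi (f t) alpha)) ->
    (forall s t, 0 <= s -> s <= t -> t <= INR r + 1 ->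
       Rabs (phi (f s) alpha) / f s <= Rabs (phi (f t) alpha) / f t) ->
    let b := fun i => sum1 r (fun j => bc j * xi j i) in
    let bd := fun i => sum1 r (fun j => bdc j * xi j i) in
    let x := fun k => sum1 r (fun j => bc j / sigma j * xih j k) in
    let xad := fun k =>
      sum1 r (fun j => bdc j * (phi (sigma j) alpha / sigma j) * xih j k) in
    forall (pr1 : Riemann_integrable
                    (fun t => rpow (Rabs (1 - phi (f t) alpha)) p) 0 (INR r + 1))
           (pr2 : Riemann_integrable
                    (fun t => rpow (Rabs (phi (f t) alpha / f t)) p) 0 (INR r + 1)),
    vnorm_p N' p (fun k => x k - xad k)
      <= C1 * vnorm_inf N' x
            * Lpnorm (fun t => 1 - phi (f t) alpha) p 0 (INR r + 1) pr1
         + C1 * vnorm_inf B (fun i => b i - bd i)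
            * Lpnorm (fun t => phi (f t) alpha / f t) p 0 (INR r + 1) pr2.
Proof.
  intros p Hp. exists (INR N' * INR r * (INR N' + INR B)).
  intros alpha phi bc bdc f Halpha Hf Hfc Hfd Hf0 Hfs Hflim Hm1 Hm2 b bd x xad pr1 pr2.
  assert (Hp0 : 0 < p) by lra.
  set (X := vnorm_inf N' x).
  set (D := vnorm_inf B (fun i => b i - bd i)).
  set (L1 := Lpnorm (fun t => 1 - phi (f t) alpha) p 0 (INR r + 1) pr1).
  set (L2 := Lpnorm (fun t => phi (f t) alpha / f t) p 0 (INR r + 1) pr2).
  assert (HX : 0 <= X) by apply vnorm_inf_nonneg.
  assert (HD : 0 <= D) by apply vnorm_inf_nonneg.
  assert (HL1 : 0 <= L1) by apply rpow_nonneg.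
  assert (HL2 : 0 <= L2) by apply rpow_nonneg.
  assert (Hrr : INR r <= INR r + 1) by lra.
  assert (Hr0 : 0 <= INR r) by apply pos_INR.
  assert (Ha : forall j, (1 <= j <= r)%nat -> Rabs (bc j / sigma j) <= INR N' * X).
  { intros j Hj. rewrite <- (coef_extract N' r xih (fun l => bc l / sigma l) j Hxih_on Hj).
    apply (coef_bound N' r xih x j Hxih_on Hj). }
  assert (Hb : forall j, (1 <= j <= r)%nat -> Rabs (bc j - bdc j) <= INR B * D).
  { intros j Hj.
    rewrite <- (coef_extract B r xi (fun l => bc l - bdc l) j Hxi_on Hj).
    rewrite (rsum_ext B _ (fun k => (b k - bd k) * xi j k)).
    - apply (coef_bound B r xi (fun i => b i - bd i) j Hxi_on Hj).
    - intros i _. f_equal. subst b bd. unfold sum1. rewrite rsum_sub.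
      apply rsum_ext. intros; ring. }
  assert (Hc : forall j, (1 <= j <= r)%nat -> Rabs (1 - phi (sigma j) alpha) <= L1).
  { intros j Hj. apply rpow_le_inv; [apply Rabs_pos|lra|].
    assert (Hjr : INR j <= INR r) by (apply le_INR; lia).
    assert (Hj0 : 0 <= INR j) by apply pos_INR.
    rewrite <- (Hfs j Hj).
    apply Rle_trans with (rpow (Rabs (1 - phi (f (INR r)) alpha)) p).
    - apply rpow_mono; [split; [apply Rabs_pos| apply Hm1; lra]|lra].
    - apply (int_ge (fun t => rpow (Rabs (1 - phi (f t) alpha)) p) 0 (INR r + 1) (INR r) pr1);
        try lra.
      + intros; apply rpow_nonneg.
      + intros t Ht. apply rpow_mono; [split; [apply Rabs_pos| apply Hm1; lra]|lra].
      + apply rpow_nonneg. }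
  assert (Hd : forall j, (1 <= j <= r)%nat -> Rabs (phi (sigma j) alpha / sigma j) <= L2).
  { intros j Hj. apply rpow_le_inv; [apply Rabs_pos|lra|].
    assert (Hjr : INR j <= INR r) by (apply le_INR; lia).
    assert (Hj0 : 0 <= INR j) by apply pos_INR.
    assert (Heq : forall t, 0 <= t -> Rabs (phi (f t) alpha / f t) = Rabs (phi (f t) alpha) / f t).
    { intros t Ht. apply Rabs_div_pos. apply Hf; auto. }
    rewrite <- (Hfs j Hj).
    apply Rle_trans with (rpow (Rabs (phi (f (INR r)) alpha / f (INR r))) p).
    - apply rpow_mono; [split; [apply Rabs_pos|]|lra].
      rewrite !Heq by lra. apply Hm2; lra.
    - apply (int_ge (fun t => rpow (Rabs (phi (f t) alpha / f t)) p) 0 (INR r + 1) (INR r) pr2);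
        try lra.
      + intros; apply rpow_nonneg.
      + intros t Ht. apply rpow_mono; [split; [apply Rabs_pos|]|lra].
        rewrite !Heq by lra. apply Hm2; lra.
      + apply rpow_nonneg. }
  set (K := INR N' * X * L1 + INR B * D * L2).
  set (c := fun j => bc j / sigma j * (1 - phi (sigma j) alpha)
                     + (bc j - bdc j) * (phi (sigma j) alpha / sigma j)).
  assert (Hcb : forall j, (1 <= j <= r)%nat -> Rabs (c j) <= K).
  { intros j Hj. unfold c, K. eapply Rle_trans; [apply Rabs_triang|].
    rewrite !Rabs_mult.
    pose proof (Ha j Hj). pose proof (Hb j Hj). pose proof (Hc j Hj). pose proof (Hd j Hj).
    pose proof (Rabs_pos (bc j / sigma j)). pose proof (Rabs_pos (bc j - bdc j)).
    pose proof (Rabs_pos (1 - phi (sigma j) alpha)).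
    pose proof (Rabs_pos (phi (sigma j) alpha / sigma j)).
    assert (0 <= INR N' * X) by (apply Rmult_le_pos; [apply pos_INR|auto]).
    assert (0 <= INR B * D) by (apply Rmult_le_pos; [apply pos_INR|auto]).
    apply Rplus_le_compat; apply Rmult_le_compat; auto. }
  assert (HK : 0 <= K).
  { unfold K. pose proof (pos_INR N'). pose proof (pos_INR B).
    assert (0 <= INR N' * X) by (apply Rmult_le_pos; auto).
    assert (0 <= INR B * D) by (apply Rmult_le_pos; auto).
    assert (0 <= INR N' * X * L1) by (apply Rmult_le_pos; auto).
    assert (0 <= INR B * D * L2) by (apply Rmult_le_pos; auto). lra. }
  assert (Hv : forall k, (k < N')%nat -> Rabs (x k - xad k) <= INR r * K).
  { intros k Hk.
    assert (E : x k - xad k = sum1 r (fun j => c j * xih j k)).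
    { subst x xad. unfold sum1. rewrite rsum_sub. apply rsum_ext. intros i Hi.
      assert (0 < sigma (S i)) by (apply Hsig_pos; lia). unfold c. field. lra. }
    rewrite E. unfold sum1. eapply Rle_trans; [apply rsum_abs|].
    rewrite <- rsum_const. apply rsum_le. intros i Hi. rewrite Rabs_mult.
    pose proof (Hcb (S i) ltac:(lia)). pose proof (entry_le1 N' r xih (S i) k Hxih_on ltac:(lia) Hk).
    pose proof (Rabs_pos (c (S i))). pose proof (Rabs_pos (xih (S i) k)). nra. }
  assert (Hmain : vnorm_p N' p (fun k => x k - xad k) <= INR N' * (INR r * K)).
  { unfold vnorm_p. apply rpow_le_inv2; auto.
    - apply rsum_nonneg; intros; apply rpow_nonneg.
    - apply Rmult_le_pos; [apply pos_INR| apply Rmult_le_pos; auto].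
    - apply Rle_trans with (rsum N' (fun _ => rpow (INR r * K) p)).
      + apply rsum_le. intros i Hi. apply rpow_mono; [|lra].
        split; [apply Rabs_pos| apply Hv; auto].
      + rewrite rsum_const. destruct N' as [|n'].
        * simpl. rewrite Rmult_0_l. apply rpow_nonneg.
        * apply rpow_scal_ge; auto. rewrite S_INR; pose proof (pos_INR n'); lra.
          apply Rmult_le_pos; auto. }
  eapply Rle_trans; [apply Hmain|].
  fold X D L1 L2.
  unfold K.
  pose proof (pos_INR N'). pose proof (pos_INR B).
  assert (0 <= INR N' * INR r * INR B * X * L1).
  { repeat apply Rmult_le_pos; auto. }
  assert (0 <= INR N' * INR r * INR N' * D * L2).
  { repeat apply Rmult_le_pos; auto. }
  replace (INR N' * (INR r * (INR N' * X * L1 + INR B * D * L2))) with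
    ((INR N' * INR r * INR N') * X * L1 + (INR N' * INR r * INR B) * D * L2) by ring.
  replace (INR N' * INR r * (INR N' + INR B) * X * L1 + INR N' * INR r * (INR N' + INR B) * D * L2)
    with ((INR N' * INR r * INR N') * X * L1 + (INR N' * INR r * INR B) * D * L2
          + (INR N' * INR r * INR B * X * L1 + INR N' * INR r * INR N' * D * L2)) by ring.
  lra.
Qed.
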